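(* Let $L$ be a (right) Leibniz algebra and $B$ an ideal of $L$. For every integer $n\geq 1$, $B^n\subseteq {}^{n}B+\mathrm{Es}(B)$.
   Context: $F$ is a field of characteristic different from $2$ and all algebras are finite-dimensional over $F$. A (right) Leibniz algebra is an $F$-vector space $L$ with a bilinear product $(x,y)\mapsto xy$ satisfying $x(yz)=(xy)z-(xz)y$ for all $x,y,z\in L$. For subspaces $U,V\subseteq L$, $UV$ denotes the linear span of all $uv$ with $u\in U$, $v\in V$. An ideal of $L$ is a subspace $B$ with $LB\subseteq B$ and $BL\subseteq B$. Right powers: $B^1=B$, $B^{n+1}=B^nB$. Left powers: ${}^1B=B$, ${}^{n+1}B=B\,({}^{n}B)$. $\mathrm{Ess}(L)$ is the ideal generated by all squares $xx$ ($x\in L$) and $\mathrm{Es}(B)=B\cap\mathrm{Ess}(L)$. *)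

(* Defs.v *)
From HB Require Import structures.
From mathcomp Require Import all_boot all_order all_algebra.
Set Implicit Arguments. Unset Strict Implicit. Unset Printing Implicit Defensive.
Import GRing.Theory.
Local Open Scope ring_scope.

Section LeibnizDefs.
Variables (F : fieldType) (L : lmodType F) (mul : L -> L -> L).

Inductive span (S : L -> Prop) : L -> Prop :=
  | span_gen x : S x -> span S x
  | span0 : span S 0
  | spanD x y : span S x -> span S y -> span S (x + y)
  | spanZ (a : F) x : span S x -> span S (a *: x).

Definition is_subspace (U : L -> Prop) : Prop :=
  [/\ U 0, (forall x y, U x -> U y -> U (x + y)) & (forall (a : F) x, U x -> U (a *: x))].

Definition sprod (U V : L -> Prop) : L -> Prop :=
  span (fun x => exists u v, [/\ U u, V v & x = mul u v]).

Definition ssum (U V : L -> Prop) : L -> Prop :=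
  fun x => exists u v, [/\ U u, V v & x = u + v].

Definition is_ideal (B : L -> Prop) : Prop :=
  [/\ is_subspace B, (forall x b, B b -> B (mul x b)) & (forall x b, B b -> B (mul b x))].

(* Right powers: rpow B n = B^n for n >= 1 (rpow B 0 := B by convention). *)
Fixpoint rpow (B : L -> Prop) (n : nat) : L -> Prop :=
  match n with
  | 0 => B
  | S m => match m with 0 => B | _ => sprod (rpow B m) B end
  end.

(* Left powers: lpow B n = ^n B for n >= 1 (lpow B 0 := B by convention). *)
Fixpoint lpow (B : L -> Prop) (n : nat) : L -> Prop :=
  match n with
  | 0 => B
  | S m => match m with 0 => B | _ => sprod B (lpow B m) end
  end.

Inductive Ess : L -> Prop :=
  | Ess_sq x : Ess (mul x x)
  | Ess0 : Ess 0
  | EssD x y : Ess x -> Ess y -> Ess (x + y)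
  | EssZ (a : F) x : Ess x -> Ess (a *: x)
  | EssMl x y : Ess y -> Ess (mul x y)
  | EssMr x y : Ess x -> Ess (mul x y).

Definition Es (B : L -> Prop) : L -> Prop := fun x => B x /\ Ess x.

End LeibnizDefs.

(* Main.v *)
Require Import Defs.
From HB Require Import structures.
From mathcomp Require Import all_boot all_order all_algebra.
Import GRing.Theory.
Local Open Scope ring_scope.

Section H.
Variables (F : fieldType) (L : vectType F) (mul : L -> L -> L).
Hypothesis mul_linl : forall z (a : F) x y, mul (a *: x + y) z = a *: mul x z + mul y z.
Hypothesis mul_linr : forall x (a : F) y z, mul x (a *: y + z) = a *: mul x y + mul x z.

Lemma mulDl x y z : mul (x + y) z = mul x z + mul y z.
Proof. by have := mul_linl z 1 x y; rewrite !scale1r. Qed.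
Lemma mulDr x y z : mul x (y + z) = mul x y + mul x z.
Proof. by have := mul_linr x 1 y z; rewrite !scale1r. Qed.

Lemma span_sub (S U : L -> Prop) : is_subspace U -> (forall x, S x -> U x) ->
  forall x, Defs.span S x -> U x.
Proof.
move=> [U0 UD UZ] SU x; elim => //; by [apply: SU | move=> *; apply: UD | move=> *; apply: UZ].
Qed.

Lemma span_subspace (S : L -> Prop) : is_subspace (Defs.span S).
Proof. split; [exact: span0 | exact: spanD | exact: spanZ]. Qed.

Lemma ssum_subspace (U V : L -> Prop) : is_subspace U -> is_subspace V -> is_subspace (ssum U V).
Proof.
move=> [U0 UD UZ] [V0 VD VZ]; split.
- by exists 0, 0; rewrite addr0.
- move=> x y [u1 [v1 [h1 h2 ->]]] [u2 [v2 [h3 h4 ->]]].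
  exists (u1 + u2), (v1 + v2); split; [exact: UD|exact: VD|by rewrite addrACA].
- move=> a x [u [v [h1 h2 ->]]]; exists (a *: u), (a *: v); split;
    [exact: UZ|exact: VZ|by rewrite scalerDr].
Qed.

Lemma Ess_subspace : is_subspace (Ess mul).
Proof. split; [exact: Ess0 | exact: EssD | exact: EssZ]. Qed.

Lemma e1 (a b c d : L) : b + c = (a + b) + (c + d) - a - d.
Proof. rewrite [a + b]addrC -!addrA; congr (b + _).
by rewrite [d + _]addrCA subrr addr0 addrCA subrr addr0. Qed.
Lemma e2 (a b c : L) : a + c = - b + ((a + b) + c).
Proof. by rewrite addrA [- b + _]addrC addrK. Qed.

Variable B : L -> Prop.
Hypothesis hB : is_ideal mul B.

Lemma Es_subspace : is_subspace (Es mul B).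
Proof.
case: hB => [[B0 BD BZ] _ _]; split.
- split; [exact: B0 | exact: Ess0].
- move=> x y [] ? ? [] ? ?; split; [exact: BD | exact: EssD].
- move=> a x [] ? ?; split; [exact: BZ | exact: EssZ].
Qed.

Lemma lpow_props m : is_subspace (lpow mul B m.+1) /\ (forall x, lpow mul B m.+1 x -> B x).
Proof.
case: hB => [hs _ hl]; case: m => [|m]; first by split.
split; first exact: span_subspace.
apply: span_sub => // x [u [v [h1 h2 ->]]]; exact: hl.
Qed.

Lemma neg_span (S : L -> Prop) x : Defs.span S x -> Defs.span S (- x).
Proof. by move=> h; rewrite -scaleN1r; apply: spanZ. Qed.

Lemma main m : forall x, rpow mul B m.+1 x -> ssum (lpow mul B m.+1) (Es mul B) x.
Proof.
case: (hB) => [[B0 BD BZ] hl hr].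
elim: m => [|m IH] x.
  by move=> hx; exists x, 0; split => //; [split; [exact: B0|exact: Ess0]|rewrite addr0].
have [lsub lB] := lpow_props m.
have sS := ssum_subspace _ _ (span_subspace (fun x => exists u v,
   [/\ B u, lpow mul B m.+1 v & x = mul u v])) Es_subspace.
move=> hx; move: x hx; apply: span_sub => // x [u [v [hu hv ->]]].
have [w [e [hw [eB eE] ->]]] := IH u hu.
have wB := lB w hw.
exists (- mul v w), ((mul w v + mul v w) + mul e v); split.
- apply: neg_span; apply: span_gen; exists v, w; split => //.
- split.
  + apply: (BD); last exact: (hr).
    by apply: (BD); [apply: (hr) | apply: (hl)].
  + apply: EssD; last exact: EssMr.
    have -> : mul w v + mul v w = mul (w + v) (w + v) - mul w w - mul v v.
      by rewrite mulDl !mulDr (e1 (mul w w) _ _ (mul v v)).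
    rewrite -!scaleN1r; apply: EssD; [apply: EssD; [exact: Ess_sq|]|]; apply: EssZ; exact: Ess_sq.
- by rewrite mulDl (e2 _ (mul v w)).
Qed.
End H.

Theorem lemma3p2 (F : fieldType) (hchar : (2%:R : F) != 0)
  (L : vectType F) (mul : L -> L -> L)
  (mul_linl : forall z (a : F) x y, mul (a *: x + y) z = a *: mul x z + mul y z)
  (mul_linr : forall x (a : F) y z, mul x (a *: y + z) = a *: mul x y + mul x z)
  (leibniz : forall x y z, mul x (mul y z) = mul (mul x y) z - mul (mul x z) y)
  (B : L -> Prop) (hB : is_ideal mul B) (n : nat) (hn : (1 <= n)%N) :
  forall x, rpow mul B n x -> ssum (lpow mul B n) (Es mul B) x.
Proof.
case: n hn => // n _; exact: main.
Qed.
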